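(* Let $\langle\mathbf{A},F\rangle$ be a finite reduced matrix and let $\vdash$ be the logic it determines. Let $Tm(x)$ (resp. $Tm(x,y)$) be the universe of the free one-generated (resp. two-generated) algebra in the variety generated by $\mathbf{A}$, whose elements are identified with chosen formulas in the variable $x$ (resp. $x,y$) representing them (one representative for each unary, resp. binary, term function of $\mathbf{A}$). Define $\Delta(x,y)=\{\varphi\in Tm(x,y):\varphi^{\mathbf{A}}(a,a)\in F\text{ for all }a\in A\}$ and $\tau(x)=\{\epsilon\approx\delta:\epsilon,\delta\in Tm(x),\ \epsilon^{\mathbf{A}}(a)=\delta^{\mathbf{A}}(a)\text{ for all }a\in F\}$. Then: (1) $\vdash$ is protoalgebraic iff $\emptyset\vdash\Delta(x,x)$ and $x,\Delta(x,y)\vdash y$. (2) $\vdash$ is equivalential iff $\emptyset\vdash\Delta(x,x)$, $x,\Delta(x,y)\vdash y$, and for every basic $n$-ary operation $f$, $\Delta(x_1,y_1)\cup\dots\cup\Delta(x_n,y_n)\vdash\Delta(f(x_1,\dots,x_n),f(y_1,\dots,y_n))$. (3) $\vdash$ is weakly algebraizable (resp. algebraizable) iff $\vdash$ is protoalgebraic (resp. equivalential) and for every submatrix $\langle\mathbf{B},G\rangle$ of $\langle\mathbf{A},F\rangle$ and every $b\in B$: $b\in G$ iff $\mathbf{B}/\Omega^{\mathbf{B}}G\vDash\tau(b/\Omega^{\mathbf{B}}G)$. (4) $\vdash$ is truth-equational iff for every $\langle\mathbf{B},G\rangle\in\mathrm{Mod}^{*}(\vdash)$ with $\mathbf{B}$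 one-generated we have $G=\{b\in B:\mathbf{B}\vDash\tau(b)\}$, and $F\subseteq\{a\in A:\mathbf{A}/\Omega^{\mathbf{A}}F\vDash\tau(a/\Omega^{\mathbf{A}}F)\}$.
   Context: A (logical) matrix is a pair $\langle \mathbf{A}, F\rangle$ with $\mathbf{A}$ an algebra and $F\subseteq A$. The Leibniz congruence $\Omega^{\mathbf{A}}F$ is the largest congruence of $\mathbf{A}$ for which $F$ is a union of blocks; the matrix is reduced if it is the identity. A submatrix of $\langle\mathbf{A},F\rangle$ is $\langle\mathbf{B},F\cap B\rangle$ for a subalgebra $\mathbf{B}$ of $\mathbf{A}$. A logic is a substitution-invariant closure relation on formulas of a fixed algebraic language; the logic determined by $\langle\mathbf{A},F\rangle$: $\Gamma\vdash\varphi$ iff every evaluation $f$ into $\mathbf{A}$ with $f[\Gamma]\subseteq F$ has $f(\varphi)\in F$. A model of $\vdash$ is a matrix $\langle\mathbf{B},G\rangle$ with $\vdash\subseteq\vdash_{\langle\mathbf{B},G\rangle}$; $\mathrm{Mod}^{*}(\vdash)$ is the class of reduced models. $\vdash$ is protoalgebraic if there is a set of formulas $\Delta'(x,y,\vec z)$ such that for every model $\langle\mathbf{B},G\rangle$ and $a,b\in B$: $\langle a,b\rangle\in\Omega^{\mathbf{B}}G$ iff $\Delta'(a,b,\vec c)\subseteq G$ for all $\vec c\in B$; equivalential if such $\Delta'$ exists without parameters $\vec z$. $\vdash$ is truth-equational if there is a set of equations $\tau'(x)$ with $G=\{b\in B:\mathbf{B}\vDash\tau'(b)\}$ for every $\langle\mathbf{B},G\rangle\in\mathrm{Mod}^{*}(\vdash)$.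 Algebraizable = equivalential and truth-equational; weakly algebraizable = protoalgebraic and truth-equational. *)

(* Defs.v *)
From Stdlib Require List.
From mathcomp Require Import all_boot.
Set Implicit Arguments. Unset Strict Implicit. Unset Printing Implicit Defensive.

Record signature := Signature { sym : Type; arity : sym -> nat }.

Section AAL.
Variable L : signature.

(* Formulas over the countable set of variables Var 0, Var 1, ...
   Convention: x = Var 0, y = Var 1. *)
Inductive term : Type :=
| Var : nat -> term
| App : forall o : sym L, ('I_(arity o) -> term) -> term.
Arguments App o _ : clear implicits.

Record algebra := Algebra {
  carrier :> Type;
  op : forall o : sym L, ('I_(arity o) -> carrier) -> carrier }.
Arguments op a o _ : clear implicits.

Fixpoint eval (A : algebra) (h : nat -> A) (t : term) : A :=
  match t with
  | Var n => h n
  | App o ts => op A o (fun i => eval h (ts i))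
  end.

Fixpoint vars_below (n : nat) (t : term) : Prop :=
  match t with
  | Var k => k < n
  | App o ts => forall i, vars_below n (ts i)
  end.

Fixpoint subst (s : nat -> term) (t : term) : term :=
  match t with
  | Var k => s k
  | App o ts => App o (fun i => subst s (ts i))
  end.

Definition sub2 (a b : term) (k : nat) : term :=
  match k with 0 => a | 1 => b | _ => Var k end.

Definition logic := (term -> Prop) -> term -> Prop.

Definition mcons (A : algebra) (F : A -> Prop) : logic :=
  fun Gamma phi => forall h : nat -> A,
    (forall psi, Gamma psi -> F (eval h psi)) -> F (eval h phi).

Definition is_model (Lg : logic) (B : algebra) (G : B -> Prop) : Prop :=
  forall Gamma phi, Lg Gamma phi -> mcons G Gamma phi.

Definition congruence (B : algebra) (th : B -> B -> Prop) : Prop :=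
  (forall a, th a a) /\ (forall a b, th a b -> th b a) /\
  (forall a b c, th a b -> th b c -> th a c) /\
  (forall o (xs ys : 'I_(arity o) -> B),
      (forall i, th (xs i) (ys i)) -> th (op B o xs) (op B o ys)).

Definition compatible (B : algebra) (th : B -> B -> Prop) (G : B -> Prop) :=
  forall a b, th a b -> G a -> G b.

(* Leibniz congruence: the largest congruence compatible with G
   (= union of all compatible congruences). *)
Definition Leibniz (B : algebra) (G : B -> Prop) (a b : B) : Prop :=
  exists th, congruence th /\ compatible th G /\ th a b.

Definition reduced (B : algebra) (G : B -> Prop) : Prop :=
  forall a b, Leibniz G a b -> a = b.

Definition protoalgebraic (Lg : logic) : Prop :=
  exists D : term -> Prop,
    forall (B : algebra) (G : B -> Prop), is_model Lg G ->
    forall a b : B, Leibniz G a b <->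
      (forall h : nat -> B, h 0 = a -> h 1 = b ->
         forall phi, D phi -> G (eval h phi)).

Definition equivalential (Lg : logic) : Prop :=
  exists D : term -> Prop,
    (forall phi, D phi -> vars_below 2 phi) /\
    forall (B : algebra) (G : B -> Prop), is_model Lg G ->
    forall a b : B, Leibniz G a b <->
      (forall h : nat -> B, h 0 = a -> h 1 = b ->
         forall phi, D phi -> G (eval h phi)).

Definition sat_eqs (B : algebra) (tau : term * term -> Prop) (b : B) : Prop :=
  forall e, tau e -> eval (fun _ => b) e.1 = eval (fun _ => b) e.2.

Definition truth_equational (Lg : logic) : Prop :=
  exists tau : term * term -> Prop,
    (forall e, tau e -> vars_below 1 e.1 /\ vars_below 1 e.2) /\
    forall (B : algebra) (G : B -> Prop), is_model Lg G -> reduced G ->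
      forall b : B, G b <-> sat_eqs tau b.

Definition weakly_algebraizable (Lg : logic) : Prop :=
  protoalgebraic Lg /\ truth_equational Lg.

Definition algebraizable (Lg : logic) : Prop :=
  equivalential Lg /\ truth_equational Lg.

(* B/Omega^B G |= tau(b/Omega^B G): the quotient operations are defined
   blockwise, so this says each equation holds up to Omega^B G. *)
Definition quot_sat (B : algebra) (G : B -> Prop)
    (tau : term * term -> Prop) (b : B) : Prop :=
  forall e, tau e -> Leibniz G (eval (fun _ => b) e.1) (eval (fun _ => b) e.2).

Definition subuniverse (A : algebra) (S : A -> Prop) : Prop :=
  forall o (xs : 'I_(arity o) -> A), (forall i, S (xs i)) -> S (op A o xs).

Definition subalg (A : algebra) (S : A -> Prop) (HS : subuniverse S) : algebra :=
  @Algebra {a : A | S a}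
    (fun o xs => exist _ (op A o (fun i => proj1_sig (xs i)))
                        (HS o _ (fun i => proj2_sig (xs i)))).

Definition one_generated (B : algebra) : Prop :=
  exists g : B, forall c : B, exists t, vars_below 1 t /\ eval (fun _ => g) t = c.

Definition finite_algebra (A : algebra) : Prop :=
  exists l : list A, forall a, List.In a l.

Definition same_fun (A : algebra) (s t : term) : Prop :=
  forall h : nat -> A, eval h s = eval h t.

(* R is a set of chosen representatives (one for each n-ary term function
   of A) of formulas in the variables Var 0..Var (n-1): the universe of the
   free n-generated algebra of V(A). *)
Definition rep_system (A : algebra) (n : nat) (R : term -> Prop) : Prop :=
  (forall phi, R phi -> vars_below n phi) /\
  (forall psi, vars_below n psi -> exists phi, R phi /\ same_fun A phi psi) /\
  (forall phi phi', R phi -> R phi' -> same_fun A phi phi' -> phi = phi').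

Definition Delta (A : algebra) (F : A -> Prop) (R2 : term -> Prop) : term -> Prop :=
  fun phi => R2 phi /\ forall a : A, F (eval (fun _ => a) phi).

Definition tau_of (A : algebra) (F : A -> Prop) (R1 : term -> Prop)
    : term * term -> Prop :=
  fun e => R1 e.1 /\ R1 e.2 /\
    forall a : A, F a -> eval (fun _ => a) e.1 = eval (fun _ => a) e.2.

End AAL.

(* Main.v *)
Require Import Defs.
From mathcomp Require Import all_boot.
From Stdlib Require Import FunctionalExtensionality ProofIrrelevance Classical ClassicalEpsilon PropExtensionality.
Set Implicit Arguments. Unset Strict Implicit. Unset Printing Implicit Defensive.

Section Basics.
Variable L : signature.
Implicit Types (B : algebra L).

Lemma eval_below B n (t : term L) (h h' : nat -> B) :
  vars_below n t -> (forall k, k < n -> h k = h' k) -> eval h t = eval h' t.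
Proof.
move=> Hb Hh; elim: t Hb => [k|o ts IH] /= Hb; first by apply: Hh.
congr (op _); apply: functional_extensionality => i; exact: IH.
Qed.

Lemma eval_subst B (h : nat -> B) s (t : term L) :
  eval h (subst s t) = eval (fun k => eval h (s k)) t.
Proof.
elim: t => [k|o ts IH] //=; congr (op _); apply: functional_extensionality => i; exact: IH.
Qed.

Lemma below_subst n s (t : term L) :
  (forall k, vars_below n (s k)) -> vars_below n (subst s t).
Proof. move=> Hs; elim: t => [k|o ts IH] //=. Qed.

Definition hom B B' (f : B -> B') :=
  forall o (xs : 'I_(arity o) -> B), f (@op _ B o xs) = @op _ B' o (fun i => f (xs i)).

Lemma eval_hom B B' (f : B -> B') (h : nat -> B) t :
  hom f -> f (eval h t) = eval (fun k => f (h k)) t.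
Proof.
move=> Hf; elim: t => [k|o ts IH] //=; rewrite Hf; congr (op _).
apply: functional_extensionality => i; exact: IH.
Qed.

Lemma proj1_hom B (S : B -> Prop) (HS : subuniverse S) :
  hom (B := subalg HS) (fun c => proj1_sig c).
Proof. by []. Qed.

Lemma model_hom B B' (f : B' -> B) (G : B -> Prop) (Lg : logic L) :
  hom f -> is_model Lg G -> is_model Lg (fun c => G (f c)).
Proof.
move=> Hf HM Gam phi Hc h Hh; rewrite eval_hom //.
apply: (HM _ _ Hc) => psi Hp; rewrite -eval_hom //; exact: Hh.
Qed.

Lemma self_model B (G : B -> Prop) : is_model (mcons G) G.
Proof. by []. Qed.

Lemma term_compat B (R : B -> B -> Prop) :
  (forall o (xs ys : 'I_(arity o) -> B), (forall i, R (xs i) (ys i)) -> R (@op _ B o xs) (@op _ B o ys)) ->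
  forall (h h' : nat -> B) t, (forall k, R (h k) (h' k)) -> R (eval h t) (eval h' t).
Proof. move=> Hop h h' t Hk; elim: t => [k|o ts IH] //=; exact: Hop. Qed.

Lemma Leibniz_refl B (G : B -> Prop) c : Leibniz G c c.
Proof.
exists (@eq B); split; last by split => // ? ? ->.
split; first by [].
split; first by move=> ? ? ->.
split; first by move=> ? ? ? -> ->.
by move=> o xs ys H; congr (op _); apply: functional_extensionality.
Qed.

Lemma chain_compat B (R : B -> B -> Prop) :
  (forall a, R a a) -> (forall a b c, R a b -> R b c -> R a c) ->
  (forall o (i0 : 'I_(arity o)) (w : 'I_(arity o) -> B) c d, R c d ->
     R (@op _ B o (fun i => if i == i0 then c else w i)) (@op _ B o (fun i => if i == i0 then d else w i))) ->
  forall o (xs ys : 'I_(arity o) -> B), (forall i, R (xs i) (ys i)) -> R (@op _ B o xs) (@op _ B o ys).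
Proof.
move=> Hr Ht H1 o xs ys Hxy.
pose mix k := fun i : 'I_(arity o) => if i < k then ys i else xs i.
have E0 : mix 0 = xs by apply: functional_extensionality.
have En : mix (arity o) = ys by apply: functional_extensionality => i; rewrite /mix ltn_ord.
suff: forall k, R (@op _ B o xs) (@op _ B o (mix k)) by move/(_ (arity o)); rewrite En.
elim=> [|k IH]; first by rewrite E0.
apply: Ht IH _.
case: (ltnP k (arity o)) => Hk; last first.
  have -> : mix k.+1 = mix k.
    apply: functional_extensionality => i; rewrite /mix.
    have h1 : i < k by apply: leq_trans (ltn_ord i) Hk.
    by rewrite h1 (ltn_trans h1 (ltnSn k)).
  exact: Hr.
pose i0 := Ordinal Hk.
have -> : mix k = (fun i => if i == i0 then xs i0 else mix k i).
  apply: functional_extensionality => i; case: eqP => [->|//].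
  by rewrite /mix /= ltnn.
have -> : mix k.+1 = (fun i => if i == i0 then ys i0 else mix k i).
  apply: functional_extensionality => i; rewrite /mix.
  have [->|Hne] := eqVneq i i0; first by rewrite /= ltnSn.
  rewrite ltnS leq_eqVlt.
  have -> : (nat_of_ord i == k) = false.
    by apply/negP => /eqP Hik; move/eqP: Hne; apply; apply: val_inj.
  done.
exact: H1.
Qed.

End Basics.

Section Theta.
Variable L : signature.
Implicit Types (B : algebra L).

Definition upd B (h : nat -> B) (c : B) : nat -> B := fun k => if k is 0 then c else h k.
Definition cst B (c : B) : nat -> B := fun _ => c.

Definition theta B (G : B -> Prop) (c d : B) :=
  forall (phi : term L) (h : nat -> B), G (eval (upd h c) phi) <-> G (eval (upd h d) phi).

Lemma theta_single B (G : B -> Prop) o (i0 : 'I_(arity o)) (w : 'I_(arity o) -> B) c d :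
  theta G c d ->
  theta G (@op _ B o (fun i => if i == i0 then c else w i)) (@op _ B o (fun i => if i == i0 then d else w i)).
Proof.
move=> Hcd phi h.
pose n := arity o.
pose sg := fun m => if m is m'.+1 then Var L (m + n)
   else @App L o (fun i => if i == i0 then Var L 0 else Var L (i.+1)).
pose e := fun j : nat => oapp w c (insub j : option 'I_(arity o)).
pose g := fun (z : B) (j : nat) => if j is j'.+1 then (if j' < n then e j' else h (j - n)) else z.
have Hg : forall z, eval (g z) (subst sg phi) =
   eval (upd h (@op _ B o (fun i => if i == i0 then z else w i))) phi.
  move=> z; rewrite eval_subst; congr eval; apply: functional_extensionality => -[|m] /=.
    congr op; apply: functional_extensionality => i; case: (i == i0) => //=.
    by rewrite ltn_ord /e valK.
  by rewrite /g ltnNge leq_addl /= addnK.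
have Hu : forall z, upd (g c) z = g z by move=> z; apply: functional_extensionality => -[|m].
have := Hcd (subst sg phi) (g c); by rewrite !Hu !Hg.
Qed.

Lemma theta_congruence B (G : B -> Prop) : congruence (theta G).
Proof.
have Hr : forall a, theta G a a by [].
have Ht : forall a b c, theta G a b -> theta G b c -> theta G a c.
  by move=> a b c H1 H2 phi h; rewrite H1 H2.
split; first by [].
split; first by move=> a b H phi h; rewrite H.
split; first by [].
apply: chain_compat => //; move=> o i0 w c d; exact: theta_single.
Qed.

Lemma theta_compatible B (G : B -> Prop) : compatible (theta G) G.
Proof. by move=> a b H; have := H (Var L 0) (cst a); rewrite /=; case. Qed.

Lemma theta_Leibniz B (G : B -> Prop) c d : theta G c d -> Leibniz G c d.
Proof.
move=> H; exists (theta G); split; first exact: theta_congruence.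
split; [exact: theta_compatible | exact: H].
Qed.

Lemma Leibniz_theta B (G : B -> Prop) c d : Leibniz G c d -> theta G c d.
Proof.
case=> Ph [[Hr [Hs [Ht Hop]]] [Hc Hcd]] phi h.
have K : forall x y, Ph x y -> Ph (eval (upd h x) phi) (eval (upd h y) phi).
  move=> x y Hxy; apply: term_compat => // -[|k] //=.
split; apply: Hc; [apply: K | apply: Hs; apply: K]; exact: Hcd.
Qed.

Lemma Leibniz_congruence B (G : B -> Prop) : congruence (Leibniz G).
Proof.
have E : Leibniz G = theta G.
  apply: functional_extensionality => c; apply: functional_extensionality => d.
  apply: propositional_extensionality; split; [exact: Leibniz_theta | exact: theta_Leibniz].
rewrite E; exact: theta_congruence.
Qed.

Lemma Leibniz_compatible B (G : B -> Prop) : compatible (Leibniz G) G.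
Proof. move=> a b H; apply: theta_compatible; exact: Leibniz_theta H. Qed.

Variables (A : algebra L) (F : A -> Prop).

Lemma key_dir B (G : B -> Prop) (Gam : term L -> Prop) (eps del : term L) :
  is_model (mcons F) G ->
  (forall psi, Gam psi -> vars_below 1 psi) -> vars_below 1 eps -> vars_below 1 del ->
  (forall c : A, (forall psi, Gam psi -> F (eval (cst c) psi)) -> eval (cst c) eps = eval (cst c) del) ->
  forall b : B, (forall psi, Gam psi -> G (eval (cst b) psi)) ->
  forall phi h, G (eval (upd h (eval (cst b) eps)) phi) -> G (eval (upd h (eval (cst b) del)) phi).
Proof.
move=> HM HG He Hd HA b Hb phi h H.
pose s1 := fun m => if m is 0 then eps else Var L m.
pose s2 := fun m => if m is 0 then del else Var L m.
pose Gam' := fun psi => Gam psi \/ psi = subst s1 phi.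
have Hc : mcons F Gam' (subst s2 phi).
  move=> k Hk.
  have Hk0 : forall psi, Gam psi -> F (eval (cst (k 0)) psi).
    move=> psi Hp; rewrite -(eval_below (h := k) (h' := cst (k 0)) (HG _ Hp)); [apply: Hk; by left | by case=> [|m]].
  have E := HA _ Hk0.
  have := Hk (subst s1 phi) (or_intror erefl).
  rewrite !eval_subst; congr F; congr eval; apply: functional_extensionality => -[|m] //=.
  rewrite (eval_below (h := k) (h' := cst (k 0)) He); last by case.
  rewrite (eval_below (h := k) (h' := cst (k 0)) Hd); last by case.
  by rewrite E.
have E1 : forall t s, vars_below 1 t -> (forall m, s m = if m is 0 then t else Var L m) ->
    eval (upd h b) (subst s phi) = eval (upd h (eval (cst b) t)) phi.
  move=> t s Ht Hs; rewrite eval_subst; congr eval; apply: functional_extensionality => -[|m];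
    rewrite Hs //=; apply: (eval_below Ht); by case=> [|m].
rewrite -(E1 del s2) //.
apply: (HM _ _ Hc) => psi [Hp|->].
  rewrite (eval_below (h' := cst b) (HG _ Hp)); [exact: Hb | by case].
by rewrite (E1 eps s1).
Qed.

Lemma key B (G : B -> Prop) (Gam : term L -> Prop) (eps del : term L) :
  is_model (mcons F) G ->
  (forall psi, Gam psi -> vars_below 1 psi) -> vars_below 1 eps -> vars_below 1 del ->
  (forall c : A, (forall psi, Gam psi -> F (eval (cst c) psi)) -> eval (cst c) eps = eval (cst c) del) ->
  forall b : B, (forall psi, Gam psi -> G (eval (cst b) psi)) ->
  Leibniz G (eval (cst b) eps) (eval (cst b) del).
Proof.
move=> HM HG He Hd HA b Hb; apply: theta_Leibniz => phi h; split;
  apply: (key_dir (Gam:=Gam)) => //.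
by move=> c Hc; rewrite (HA c Hc).
Qed.

End Theta.

Section Red.
Variable L : signature.
Implicit Types (B : algebra L).

Lemma sig_eq (U : Type) (P : U -> Prop) (x y : {u | P u}) : proj1_sig x = proj1_sig y -> x = y.
Proof. case: x => x p; case: y => y q /= E; subst; f_equal; apply: proof_irrelevance. Qed.

Section Construction.
Variables (B : algebra L) (G : B -> Prop).

Let Hcong := Leibniz_congruence G.
Definition Qc := {P : B -> Prop | exists c, P = (Leibniz G) c}.
Definition qpi (c : B) : Qc := exist _ ((Leibniz G) c) (ex_intro _ c erefl).
Definition qrep (q : Qc) : B := proj1_sig (constructive_indefinite_description _ (proj2_sig q)).
Lemma qrep_spec q : proj1_sig q = (Leibniz G) (qrep q).
Proof. rewrite /qrep; case: constructive_indefinite_description => //. Qed.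

Lemma qpi_eq c d : (Leibniz G) c d -> qpi c = qpi d.
Proof.
case: Hcong => Hr [Hs [Ht _]] H; apply: sig_eq => /=.
apply: functional_extensionality => x; apply: propositional_extensionality; split => Hx.
  by apply: Ht (Hs _ _ H) Hx.
by apply: Ht H Hx.
Qed.

Lemma qpi_inv c d : qpi c = qpi d -> (Leibniz G) c d.
Proof.
case: Hcong => Hr [Hs [Ht _]] E.
have E' : (Leibniz G) c = (Leibniz G) d by have := f_equal (@proj1_sig _ _) E.
by apply: Hs; rewrite -E'; apply: Hr.
Qed.

Lemma qpi_rep q : qpi (qrep q) = q.
Proof. by apply: sig_eq => /=; rewrite -qrep_spec. Qed.

Definition Qalg : algebra L := @Algebra L Qc (fun o qs => qpi (@op _ B o (fun i => qrep (qs i)))).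
Definition QH (q : Qalg) : Prop := G (qrep q).

Lemma qpi_hom : hom (B' := Qalg) qpi.
Proof.
move=> o xs /=; apply: qpi_eq; case: Hcong => Hr [Hs [Ht Hop]]; apply: Hop => i.
apply: qpi_inv; by rewrite qpi_rep.
Qed.

Lemma QH_pi c : QH (qpi c) <-> G c.
Proof.
rewrite /QH; have Hc : (Leibniz G) (qrep (qpi c)) c by apply: qpi_inv; rewrite qpi_rep.
case: Hcong => Hr [Hs [Ht _]].
split; apply: Leibniz_compatible => //; exact: Hs.
Qed.

Lemma QH_reduced : reduced QH.
Proof.
move=> q1 q2 [Ph [[Hr [Hs [Ht Hop]]] [Hc H12]]].
rewrite -(qpi_rep q1) -(qpi_rep q2); apply: qpi_eq.
exists (fun c d => Ph (qpi c) (qpi d)); split; last split.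
- split; first by move=> ?; apply: Hr.
  split; first by move=> ? ? ?; apply: Hs.
  split; first by move=> ? ? ? ?; apply: Ht.
  by move=> o xs ys Hxy; rewrite !qpi_hom; apply: Hop.
- by move=> c d Hcd /QH_pi Hg; apply/QH_pi; apply: Hc Hcd Hg.
- by rewrite !qpi_rep.
Qed.
End Construction.

Lemma reduction B (G : B -> Prop) : exists (Q : algebra L) (H : Q -> Prop) (pi : B -> Q),
  hom pi /\ (forall c, H (pi c) <-> G c) /\ reduced H /\
  (forall c d, pi c = pi d <-> Leibniz G c d) /\ (forall q, exists c, pi c = q).
Proof.
exists (Qalg G), (@QH B G), (@qpi B G); split; first exact: qpi_hom.
split; first exact: QH_pi.
split; first exact: QH_reduced.
split; first by move=> c d; split; [apply: qpi_inv | apply: qpi_eq].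
by move=> q; exists (qrep q); apply: qpi_rep.
Qed.

Lemma surj_model B (Q : algebra L) (G : B -> Prop) (H : Q -> Prop) (pi : B -> Q) (Lg : logic L) :
  hom pi -> (forall c, H (pi c) <-> G c) -> (forall q, exists c, pi c = q) ->
  is_model Lg G -> is_model Lg H.
Proof.
move=> Hh HG Hs HM Gam phi Hc h Hk.
pose r := fun k => proj1_sig (constructive_indefinite_description _ (Hs (h k))).
have Er : h = fun k => pi (r k).
  apply: functional_extensionality => k; rewrite /r.
  by case: constructive_indefinite_description.
rewrite Er -eval_hom //; apply/HG; apply: (HM _ _ Hc) => psi Hp.
by apply/HG; rewrite eval_hom // -Er; apply: Hk.
Qed.

Lemma surj_onegen B (Q : algebra L) (pi : B -> Q) :
  hom pi -> (forall q, exists c, pi c = q) -> one_generated B -> one_generated Q.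
Proof.
move=> Hh Hs [g Hg]; exists (pi g) => q.
case: (Hs q) => c <-; case: (Hg c) => t [Ht <-]; exists t; split => //.
by rewrite eval_hom.
Qed.

Definition genS B (b : B) (c : B) : Prop := exists t, vars_below 1 t /\ eval (cst b) t = c.

Lemma genS_sub B (b : B) : subuniverse (genS b).
Proof.
move=> o xs Hx.
pose ts := fun i => proj1_sig (constructive_indefinite_description _ (Hx i)).
exists (@App L o ts); split.
  by move=> i; rewrite /ts; case: constructive_indefinite_description => t [].
rewrite /=; congr op; apply: functional_extensionality => i; rewrite /ts.
by case: constructive_indefinite_description => t [].
Qed.

Definition gen B (b : B) : subalg (genS_sub (b:=b)) :=
  exist (genS b) b (ex_intro _ (Var L 0) (conj (erefl true) erefl)).

Lemma proj1_eval B (S : B -> Prop) (HS : subuniverse S) (h : nat -> subalg HS) t :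
  proj1_sig (eval h t) = eval (fun k => proj1_sig (h k)) t.
Proof. by rewrite (eval_hom _ _ (@proj1_hom _ B S HS)). Qed.

Lemma gen_onegen B (b : B) : one_generated (subalg (genS_sub (b:=b))).
Proof.
exists (gen b) => -[c [t [Ht E]]]; exists t; split => //.
by apply: sig_eq; rewrite proj1_eval.
Qed.

End Red.

Section Main.
Variable L : signature.
Variables (A : algebra L) (F : A -> Prop) (R1 R2 : term L -> Prop).
Hypothesis hred : reduced F.
Hypothesis hR1 : rep_system A 1 R1.
Hypothesis hR2 : rep_system A 2 R2.
Implicit Types (B : algebra L).

Local Notation Lg := (mcons F).
Local Notation D := (Delta F R2).
Local Notation T := (tau_of F R1).

Lemma T_unary e : T e -> vars_below 1 e.1 /\ vars_below 1 e.2.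
Proof. case: hR1 => H _ [H1 [H2 _]]; split; exact: H. Qed.

Lemma KEY1 B (G : B -> Prop) : is_model Lg G -> forall b, G b -> forall e, T e ->
  Leibniz G (eval (cst b) e.1) (eval (cst b) e.2).
Proof.
move=> HM b Gb e Te; case: (T_unary Te) => H1 H2.
apply: (key (F := F) (Gam := fun psi => psi = Var L 0) HM) => //.
- by move=> psi E; subst psi.
- by move=> c Hc; case: Te => _ [_ He]; apply: He; exact: (Hc _ erefl).
- by move=> psi E; subst psi.
Qed.

Lemma T_true_reduced B (G : B -> Prop) : is_model Lg G -> reduced G -> forall b, G b -> sat_eqs T b.
Proof. move=> HM Hr b Gb e Te; apply: Hr; exact: KEY1. Qed.

Lemma TE_T : truth_equational Lg ->
  forall B (G : B -> Prop), is_model Lg G -> reduced G -> forall b, G b <-> sat_eqs T b.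
Proof.
case=> tau [Hu Ht] B G HM Hr b; split; first exact: T_true_reduced.
move=> Hs; apply/(Ht B G HM Hr) => e He.
case: (Hu e He) => Hu1 Hu2.
have HA : forall c, F c -> eval (cst c) e.1 = eval (cst c) e.2.
  move=> c Fc; have := (Ht A F (@self_model _ A F) hred c).1 Fc; exact.
case: hR1 => Hb [Hex _].
case: (Hex _ Hu1) => e1 [R1e1 Se1]; case: (Hex _ Hu2) => e2 [R1e2 Se2].
have Te' : T (e1, e2).
  split => //; split => //= c Fc; by rewrite Se1 Se2 HA.
have := Hs _ Te' => /= E.
have Id : forall t t', vars_below 1 t -> vars_below 1 t' -> same_fun A t t' ->
    eval (cst b) t = eval (cst b) t'.
  move=> t t' Ht1 Ht2 Htt; apply: Hr.
  apply: (key (F := F) (Gam := fun _ => False) HM) => // c _; exact: Htt.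
rewrite -(Id _ _ (Hb _ R1e1) Hu1 Se1) E; exact: (Id _ _ (Hb _ R1e2) Hu2 Se2).
Qed.

Definition subcond :=
  forall (S : A -> Prop) (HS : subuniverse S) (b : subalg HS),
      F (proj1_sig b) <->
      quot_sat (B := subalg HS) (fun c => F (proj1_sig c)) T b.

Lemma sub_model (S : A -> Prop) (HS : subuniverse S) :
  is_model Lg (B := subalg HS) (fun c => F (proj1_sig c)).
Proof. apply: model_hom; [exact: proj1_hom | exact: self_model]. Qed.

Lemma TE_sub : truth_equational Lg -> subcond.
Proof.
move=> HTE S HS b; split.
  move=> Fb e Te; exact: (KEY1 (@sub_model S HS) Fb Te).
move=> Hq.
have [Q [H [pi [Hh [HG [Hr [Hpi Hs]]]]]]] := reduction (B := subalg HS) (fun c => F (proj1_sig c)).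
have HMQ : is_model Lg H by apply: surj_model Hh HG Hs (@sub_model S HS).
apply/HG; apply/(TE_T HTE HMQ Hr) => e Te.
rewrite -!(eval_hom _ _ Hh); apply/Hpi; exact: Hq.
Qed.

Lemma proto_sub_TE : protoalgebraic Lg -> subcond -> truth_equational Lg.
Proof.
case=> D' HD' Hsub; exists T; split; first exact: T_unary.
move=> B G HM Hr b; split; first exact: T_true_reduced.
move=> Hsat; apply: NNPP => Gb.
have [a [Fa Ha]] : exists a, ~ F a /\ forall t, vars_below 1 t -> G (eval (cst b) t) -> F (eval (cst a) t).
  apply: NNPP => Hn; apply: Gb.
  pose Gam := fun psi => vars_below 1 psi /\ G (eval (cst b) psi).
  have Hc : Lg Gam (Var L 0).
    move=> k Hk; apply: NNPP => Fk; apply: Hn; exists (k 0); split => // t Ht Gt.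
    rewrite -(eval_below (h := k) (h' := cst (k 0)) Ht); last by case.
    exact: Hk.
  exact: (HM _ _ Hc (cst b) (fun psi Hp => proj2 Hp)).
pose A' := subalg (genS_sub (b := a)).
pose G' := fun c : A' => F (proj1_sig c).
have HM' : is_model Lg G' by apply: sub_model.
have [e [Te Hne]] : exists e, T e /\ ~ Leibniz G' (eval (cst (gen a)) e.1) (eval (cst (gen a)) e.2).
  apply: NNPP => Hn; apply: Fa; apply/(Hsub _ _ (gen a)) => e Te.
  apply: NNPP => Hl; apply: Hn; exists e; split => //.
have [h [phi [H0 [H1 [HDp HnG]]]]] : exists h phi, h 0 = eval (cst (gen a)) e.1 /\
    h 1 = eval (cst (gen a)) e.2 /\ D' phi /\ ~ G' (eval h phi).
  apply: NNPP => Hn; apply: Hne; apply/(HD' _ _ HM') => h H0 H1 phi Hp.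
  apply: NNPP => HnG; apply: Hn; exists h, phi; split => //.
case: (T_unary Te) => He1 He2.
pose u := fun m => proj1_sig (constructive_indefinite_description _ (proj2_sig (h m))).
have Hu : forall m, vars_below 1 (u m) /\ eval (cst a) (u m) = proj1_sig (h m).
  by move=> m; rewrite /u; case: constructive_indefinite_description.
pose u' := fun m => match m with 0 => e.1 | 1 => e.2 | _ => u m end.
pose t := subst u' phi.
have Ht : vars_below 1 t by apply: below_subst => -[|[|m]] //=; case: (Hu m.+2).
apply: HnG; rewrite /G' proj1_eval.
have -> : (fun k => proj1_sig (h k)) = fun m => eval (cst a) (u' m).
  apply: functional_extensionality => -[|[|m]] /=; last by case: (Hu m.+2).
    by rewrite H0 proj1_eval.
  by rewrite H1 proj1_eval.
rewrite -eval_subst; apply: Ha => //.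
rewrite eval_subst.
have E : eval (cst b) e.1 = eval (cst b) e.2 by apply: Hsat.
have := (HD' B G HM (eval (cst b) e.1) (eval (cst b) e.1)).1 (Leibniz_refl _ _).
apply => //=; by rewrite E.
Qed.

Lemma part4 : truth_equational Lg <->
     (forall (B : algebra L) (G : B -> Prop), is_model Lg G -> reduced G ->
        one_generated B -> forall b : B, G b <-> sat_eqs T b) /\
     (forall a : A, F a -> quot_sat F T a).
Proof.
split.
  move=> HTE; split; first by move=> B G HM Hr _; exact: TE_T.
  move=> a Fa e [_ [_ He]]; rewrite (He a Fa); exact: Leibniz_refl.
case=> P1 _; exists T; split; first exact: T_unary.
move=> B G HM Hr b; split; first exact: T_true_reduced.
move=> Hsat.
pose C := subalg (genS_sub (b := b)).
pose GC := fun c : C => G (proj1_sig c).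
have HMC : is_model Lg GC by apply: model_hom; [exact: proj1_hom | exact: HM].
have [Q [H [pi [Hh [HG [HrQ [Hpi Hs]]]]]]] := reduction GC.
have HMQ : is_model Lg H by apply: surj_model Hh HG Hs HMC.
have HQ1 : one_generated Q by apply: surj_onegen Hh Hs (gen_onegen b).
have : H (pi (gen b)).
  apply/(P1 Q H HMQ HrQ HQ1) => e Te.
  rewrite -!(eval_hom _ _ Hh); congr pi; apply: sig_eq; rewrite !proj1_eval.
  exact: Hsat.
by move/HG.
Qed.

End Main.

Section Parts12.
Variable L : signature.
Variables (A : algebra L) (F : A -> Prop) (R1 R2 : term L -> Prop).
Hypothesis hred : reduced F.
Hypothesis hR2 : rep_system A 2 R2.
Implicit Types (B : algebra L).

Local Notation Lg := (mcons F).
Local Notation D := (Delta F R2).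

Definition dupv B (g : nat -> B) : nat -> B := fun k => match k with 0 => g 0 | 1 => g 0 | _ => g k end.
Definition bin B (c d : B) : nat -> B := fun k => if k is 0 then c else d.

Lemma eval_sub2xx B (g : nat -> B) phi :
  eval g (subst (sub2 (Var L 0) (Var L 0)) phi) = eval (dupv g) phi.
Proof. rewrite eval_subst; congr eval; by apply: functional_extensionality => -[|[|k]]. Qed.

Definition Dstar phi := Lg (fun _ => False) (subst (sub2 (Var L 0) (Var L 0)) phi).

Lemma Dstar_model B (G : B -> Prop) : is_model Lg G -> forall phi, Dstar phi ->
  forall g : nat -> B, G (eval (dupv g) phi).
Proof. move=> HM phi Hp g; rewrite -eval_sub2xx; exact: (HM _ _ Hp g). Qed.

Lemma Dstar_sem phi : Dstar phi <-> forall k : nat -> A, F (eval (dupv k) phi).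
Proof.
split; first by move=> H k; rewrite -eval_sub2xx; apply: H.
by move=> H k _; rewrite eval_sub2xx.
Qed.

Lemma D_below phi : D phi -> vars_below 2 phi.
Proof. case: hR2 => H _ [Hp _]; exact: H. Qed.

Lemma C0 phi : D phi -> Dstar phi.
Proof.
move=> Dp; apply/Dstar_sem => k.
rewrite (eval_below (h' := cst (k 0)) (D_below Dp)); first exact: (proj2 Dp).
by case=> [|[|j]].
Qed.

Definition Gam0 := fun psi => psi = Var L 0 \/ D psi.

Lemma MP_model B (G : B -> Prop) : Lg Gam0 (Var L 1) -> is_model Lg G ->
  forall u v, G u -> (forall del, D del -> G (eval (bin u v) del)) -> G v.
Proof.
move=> HMP HM u v Gu Hd; have := HM _ _ HMP (bin u v); apply => psi [E|Dp].
  by subst psi.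
exact: Hd.
Qed.

Lemma proto_char (HMP : Lg Gam0 (Var L 1)) B (G : B -> Prop) (HM : is_model Lg G) a b :
  Leibniz G a b <-> (forall h : nat -> B, h 0 = a -> h 1 = b ->
         forall phi, Dstar phi -> G (eval h phi)).
Proof.
split.
  case=> Ph [[Hr [Hs [Ht Hop]]] [Hc Hab]] h H0 H1 phi Dp.
  apply: (Hc (eval (dupv h) phi)); last exact: Dstar_model.
  apply: (term_compat Hop) => -[|[|k]] //=; by rewrite H0 H1.
pose ths := fun c d => forall h : nat -> B, h 0 = c -> h 1 = d ->
         forall phi, Dstar phi -> G (eval h phi).
have Hsym : forall c d, ths c d -> ths d c.
  move=> c d H h H0 H1 phi Dp.
  pose swp := fun k => match k with 0 => Var L 1 | 1 => Var L 0 | _ => Var L k end.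
  pose h' := fun k => match k with 0 => h 1 | 1 => h 0 | _ => h k end.
  have E : eval h' (subst swp phi) = eval h phi.
    by rewrite eval_subst; congr eval; apply: functional_extensionality => -[|[|k]].
  rewrite -E; apply: H => //.
  apply/Dstar_sem => k; rewrite eval_subst.
  have -> : (fun m => eval (dupv k) (swp m)) = dupv k.
    by apply: functional_extensionality => -[|[|m]].
  exact: (Dstar_sem phi).1 Dp k.
have Hcore : forall c d, ths c d -> forall phi g, G (eval (upd g c) phi) -> G (eval (upd g d) phi).
  move=> c d H phi g Gu.
  apply: (MP_model HMP HM Gu) => del Dd.
  pose r1 := fun m => if m is m'.+1 then Var L (m.+1) else Var L 0.
  pose r2 := fun m => if m is m'.+1 then Var L (m.+1) else Var L 1.
  pose g' := fun k => match k with 0 => c | 1 => d | k'.+2 => g k'.+1 end.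
  have E1 : eval g' (subst r1 phi) = eval (upd g c) phi.
    by rewrite eval_subst; congr eval; apply: functional_extensionality => -[|m].
  have E2 : eval g' (subst r2 phi) = eval (upd g d) phi.
    by rewrite eval_subst; congr eval; apply: functional_extensionality => -[|m].
  have Ep : eval g' (subst (sub2 (subst r1 phi) (subst r2 phi)) del) =
      eval (bin (eval (upd g c) phi) (eval (upd g d) phi)) del.
    rewrite eval_subst; apply: (eval_below (D_below Dd)) => -[|[|j]] //= _.
  rewrite -Ep; apply: H => //.
  apply/Dstar_sem => k; rewrite eval_subst.
  have Ew : eval (dupv k) (subst r1 phi) = eval (dupv k) (subst r2 phi).
    by rewrite !eval_subst; congr eval; apply: functional_extensionality => -[|m].
  rewrite (eval_below (h' := cst (eval (dupv k) (subst r1 phi))) (D_below Dd)).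
    exact: (proj2 Dd).
  by case=> [|[|j]] //= _; rewrite Ew.
move=> H; apply: theta_Leibniz => phi g; split; apply: Hcore => //; exact: Hsym.
Qed.

Definition TmA : algebra L := @Algebra L (term L) (fun o ts => @App L o ts).

Lemma eval_Tm (h : nat -> TmA) t : eval h t = subst h t.
Proof.
elim: t => [k|o ts IH] //=; congr App; apply: functional_extensionality => i; exact: IH.
Qed.

Definition S2 (t : TmA) : Prop := vars_below 2 t.
Lemma S2sub : subuniverse S2.
Proof. by move=> o xs Hx. Qed.

Lemma theory_model Gam0' : is_model Lg (B := TmA) (fun t => Lg Gam0' t).
Proof.
move=> Gam phi Hc h Hh k Hk; rewrite eval_Tm eval_subst.
apply: Hc => psi Hp; rewrite -eval_subst -eval_Tm; exact: Hh psi Hp k Hk.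
Qed.

Lemma proto_MP : protoalgebraic Lg -> Lg Gam0 (Var L 1).
Proof.
case=> D' HD'.
pose T2 := subalg S2sub.
pose G2 := fun u : T2 => Lg Gam0 (proj1_sig u).
have HM2 : is_model Lg G2 by apply: model_hom; [exact: proj1_hom | exact: theory_model].
pose x2 : T2 := exist S2 (Var L 0) (erefl true).
pose y2 : T2 := exist S2 (Var L 1) (erefl true).
have HL : Leibniz G2 x2 y2.
  apply/(HD' _ _ HM2) => h H0 H1 phi Hp.
  rewrite /G2 proj1_eval eval_Tm.
  pose s := fun k => proj1_sig (h k).
  have Hps : vars_below 2 (subst s phi) by apply: below_subst => k; exact: (proj2_sig (h k)).
  have Hcc : forall c, F (eval (cst c) (subst s phi)).
    move=> c; rewrite eval_subst.
    apply: ((HD' A F (@self_model _ A F) c c).1 (Leibniz_refl _ _)) => //.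
      by rewrite /s H0.
    by rewrite /s H1.
  case: hR2 => _ [Hex _]; case: (Hex _ Hps) => del [R2d Sd].
  have Dd : D del by split => // c; rewrite Sd; exact: Hcc.
  move=> k Hk; rewrite -Sd; apply: Hk; by right.
apply: (Leibniz_compatible HL).
by move=> k Hk; apply: Hk; left.
Qed.

Lemma part1 : protoalgebraic Lg <->
     (forall phi, D phi -> Lg (fun _ => False) (subst (sub2 (Var L 0) (Var L 0)) phi)) /\
     Lg (fun psi => psi = Var L 0 \/ D psi) (Var L 1).
Proof.
split.
  move=> Hp; split; [exact: C0 | exact: proto_MP].
case=> _ HMP; exists Dstar => B G HM a b; exact: proto_char.
Qed.

Lemma half2 (i : nat) : (2 * i)./2 = i.
Proof. rewrite mul2n; exact: (half_bit_double i false). Qed.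
Lemma odd2 (i : nat) : odd (2 * i) = false.
Proof. by rewrite mul2n odd_double. Qed.
Lemma half21 (i : nat) : (2 * i + 1)./2 = i.
Proof. rewrite mul2n addn1; exact: (half_bit_double i true). Qed.
Lemma odd21 (i : nat) : odd (2 * i + 1) = true.
Proof. by rewrite mul2n addn1 /= odd_double. Qed.

Lemma part2 : equivalential Lg <->
     (forall phi, D phi -> Lg (fun _ => False) (subst (sub2 (Var L 0) (Var L 0)) phi)) /\
     Lg (fun psi => psi = Var L 0 \/ D psi) (Var L 1) /\
     (forall (o : sym L) phi, D phi ->
        Lg (fun psi => exists (i : 'I_(arity o)) chi, D chi /\
              psi = subst (sub2 (Var L (2 * i)) (Var L (2 * i + 1))) chi)
           (subst (sub2 (@App L o (fun i => Var L (2 * i)))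
                        (@App L o (fun i => Var L (2 * i + 1)))) phi)).
Proof.
split.
  case=> D' [HD'b HD'].
  have EQ : forall a b : A, (forall del, D del -> F (eval (bin a b) del)) -> a = b.
    move=> a b H; apply: hred; apply/(HD' A F (@self_model _ A F)) => h H0 H1 phi Hp.
    rewrite (eval_below (h' := bin a b) (HD'b _ Hp)); last by case=> [|[|k]] //= _; rewrite ?H0 ?H1.
    case: hR2 => _ [Hex _]; case: (Hex phi (HD'b _ Hp)) => del [R2d Sd].
    rewrite -Sd; apply: H; split => // c; rewrite Sd.
    by apply: ((HD' A F (@self_model _ A F) c c).1 (Leibniz_refl _ _)).
  split; first exact: C0.
  split; first by apply: proto_MP; exists D'.
  move=> o phi Dp k Hk.
  have Hi : forall i : 'I_(arity o), k (2 * i) = k (2 * i + 1).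
    move=> i; apply: EQ => del Dd.
    have E : eval (fun j => eval k (sub2 (Var L (2 * i)) (Var L (2 * i + 1)) j)) del =
        eval (bin (k (2 * i)) (k (2 * i + 1))) del.
      by apply: (eval_below (D_below Dd)); case=> [|[|j]].
    by rewrite -E -eval_subst; apply: Hk; exists i, del.
  rewrite eval_subst.
  rewrite (eval_below (h' := cst (@op _ A o (fun i => k (2 * i)))) (D_below Dp)).
    exact: (proj2 Dp).
  case=> [|[|j]] //= _; congr op; apply: functional_extensionality => i; by rewrite Hi.
case=> _ [HMP HRe]; exists D; split; first exact: D_below.
move=> B G HM a b.
pose thD := fun c d => forall del, D del -> G (eval (bin c d) del).
split.
  move=> HL h H0 H1 del Dd; exact: (proj1 (proto_char HMP HM a b) HL h H0 H1 del (C0 Dd)).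
move=> Hth; apply/(proto_char HMP HM) => h H0 H1 phi Dsp.
have Hr : forall c, thD c c.
  move=> c del Dd; have := Dstar_model HM (C0 Dd) (cst c).
  by have -> : dupv (cst c) = bin c c by apply: functional_extensionality => -[|[|k]].
have Hop : forall o (xs ys : 'I_(arity o) -> B), (forall i, thD (xs i) (ys i)) ->
    thD (@op _ B o xs) (@op _ B o ys).
  move=> o xs ys Hxy del Dd.
  pose g := fun j : nat => if odd j then oapp ys (@op _ B o xs) (insub j./2 : option 'I_(arity o))
                           else oapp xs (@op _ B o xs) (insub j./2 : option 'I_(arity o)).
  have := HM _ _ (HRe o del Dd) g.
  have -> : eval g (subst (sub2 (@App L o (fun i => Var L (2 * i)))
                        (@App L o (fun i => Var L (2 * i + 1)))) del) =
            eval (bin (@op _ B o xs) (@op _ B o ys)) del.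
    rewrite eval_subst; apply: (eval_below (D_below Dd)) => -[|[|j]] //= _;
      congr op; apply: functional_extensionality => i; rewrite /g ?odd2 ?odd21 ?half2 ?half21 /= valK //.
  apply => psi [i [chi [Dc ->]]].
  rewrite eval_subst (eval_below (h' := bin (xs i) (ys i)) (D_below Dc)); first exact: Hxy.
  case=> [|[|j]] //= _; rewrite /g ?odd2 ?odd21 ?half2 ?half21 /= valK //.
have Hc : thD (eval (dupv h) phi) (eval h phi).
  apply: (term_compat Hop) => -[|[|k]] //=; rewrite H0 H1.
  by move=> del Dd; apply: Hth.
apply: (MP_model HMP HM (Dstar_model HM Dsp h)); exact: Hc.
Qed.

End Parts12.
Unset Implicit Arguments. Set Strict Implicit.

Theorem lemma2p4 (L : signature) (A : algebra L) (F : A -> Prop)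
    (R1 R2 : term L -> Prop) :
  finite_algebra A -> reduced F ->
  rep_system A 1 R1 -> rep_system A 2 R2 ->
  let Lg := mcons F in
  let D := Delta F R2 in
  let T := tau_of F R1 in
  let subcond :=
    forall (S : A -> Prop) (HS : subuniverse S) (b : subalg HS),
      F (proj1_sig b) <->
      quot_sat (B := subalg HS) (fun c => F (proj1_sig c)) T b in
  (* (1) *)
  (protoalgebraic Lg <->
     (forall phi, D phi -> Lg (fun _ => False) (subst (sub2 (Var L 0) (Var L 0)) phi)) /\
     Lg (fun psi => psi = Var L 0 \/ D psi) (Var L 1)) /\
  (* (2) *)
  (equivalential Lg <->
     (forall phi, D phi -> Lg (fun _ => False) (subst (sub2 (Var L 0) (Var L 0)) phi)) /\
     Lg (fun psi => psi = Var L 0 \/ D psi) (Var L 1) /\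
     (forall (o : sym L) phi, D phi ->
        Lg (fun psi => exists (i : 'I_(arity o)) chi, D chi /\
              psi = subst (sub2 (Var L (2 * i)) (Var L (2 * i + 1))) chi)
           (subst (sub2 (@App L o (fun i => Var L (2 * i)))
                        (@App L o (fun i => Var L (2 * i + 1)))) phi))) /\
  (* (3) *)
  ((weakly_algebraizable Lg <-> protoalgebraic Lg /\ subcond) /\
   (algebraizable Lg <-> equivalential Lg /\ subcond)) /\
  (* (4) *)
  (truth_equational Lg <->
     (forall (B : algebra L) (G : B -> Prop), is_model Lg G -> reduced G ->
        one_generated B -> forall b : B, G b <-> sat_eqs T b) /\
     (forall a : A, F a -> quot_sat F T a)).
Proof.
move=> _ Hred HR1 HR2 Lg D T subcond.
have EP : forall Lg' : logic L, equivalential Lg' -> protoalgebraic Lg'.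
  move=> Lg' [D' [_ H]]; by exists D'.
split; first exact: (part1 F HR2).
split; first exact: (part2 Hred HR2).
split; last exact: (part4 Hred HR1).
split.
  split.
    case=> Hp Hte; split => //; exact: (@TE_sub _ _ F R1 Hred HR1 Hte).
  case=> Hp Hs; split => //; exact: (proto_sub_TE HR1 Hp).
split.
  case=> Hp Hte; split => //; exact: (@TE_sub _ _ F R1 Hred HR1 Hte).
case=> Hp Hs; split => //; exact: (proto_sub_TE HR1 (EP _ Hp)).
Qed.
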